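(* Let $X$ be a connected thin combinatorial $2$-complex that satisfies the Perimeter-reduction hypothesis, and let $\mathcal H\le\mathrm{Aut}(X)$ be finitely generated relative to a finite collection of $0$-cell stabilizers. Then there exists a connected $\mathcal H$-cocompact subcomplex $Y\subset X$ with no missing $3$-shells.
   Context: $\mathrm{Aut}(X)$ is the group of cellular automorphisms. A side at a $1$-cell $x$ is a pair $(R,r)$, $R$ a $2$-cell, $r$ a $1$-cell of $\partial R$ mapping to $x$; $X$ is thin if each $1$-cell has finitely many sides. For a subcomplex $Y$, $\mathrm{Missing}_X(Y,x)$ is the set of sides at $x$ not factoring through $Y$. $Y$ is $\mathcal H$-cocompact if $\mathcal H$-invariant with finitely many $\mathcal H$-orbits of cells; then $\mathrm{per}(Y,\mathcal H)=\sum_i|\mathrm{Missing}_X(Y,y_i)|$ over representatives $y_i$ of the $\mathcal H$-orbits of $1$-cells of $Y$. A piece is a nontrivial path factoring through boundary cycles of two $2$-cells in essentially distinct ways (no compatible homeomorphism of boundary cycles). A missing $3$-shell of $Y$ is a $2$-cell $R\not\subset Y$ with $\partial R=QS$, $Q$ a path in $Y$, $S$ a concatenation of at most $3$ pieces. $\mathcal H$ is finitely generated relative to a finite collection of $0$-cell stabilizers if for some $0$-cells $v_1,\dots,v_n$ and finite $S\subset\mathcal H$, $S\cup\bigcup_i\mathrm{Stab}_{\mathcal H}(v_i)$ generates $\mathcal H$. $X$ satisfies the Perimeter-reduction hypothesis if for every such relatively finitely generated $\mathcal H$ and every connected $\mathcal H$-cocompact $Y\subset X$ having a missing $3$-shell,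 there is a connected $\mathcal H$-cocompact $Y'\subset X$ with $\mathrm{per}(Y',\mathcal H)<\mathrm{per}(Y,\mathcal H)$. *)

(* Defs.v *)
From Stdlib Require Import List Arith Bool.
Import ListNotations.
Set Implicit Arguments.

(* A combinatorial 2-complex: 0-cells V, 1-cells E (each with an initial and
   terminal 0-cell), 2-cells F whose attaching map is a closed combinatorial
   path [bd R], a cyclic list of oriented 1-cells ("darts"). *)
Record complex : Type := Complex {
  V : Type; E : Type; F : Type;
  e1 : E -> V; e2 : E -> V;
  bd : F -> list (E * bool) }.

(* (e, true) traverses e from e1 to e2; (e, false) from e2 to e1. *)
Definition dart (X : complex) := (E X * bool)%type.
Definition dsrc {X : complex} (d : dart X) : V X :=
  if snd d then e1 X (fst d) else e2 X (fst d).
Definition dtgt {X : complex} (d : dart X) : V X :=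
  if snd d then e2 X (fst d) else e1 X (fst d).
Definition drev {X : complex} (d : dart X) : dart X := (fst d, negb (snd d)).

Fixpoint path_from {X : complex} (v : V X) (l : list (dart X)) : Prop :=
  match l with
  | [] => True
  | d :: l' => dsrc d = v /\ path_from (dtgt d) l'
  end.
Fixpoint path_end {X : complex} (v : V X) (l : list (dart X)) : V X :=
  match l with
  | [] => v
  | d :: l' => path_end (dtgt d) l'
  end.

Definition wf_complex (X : complex) : Prop :=
  forall R : F X, exists d l, bd X R = d :: l /\
    path_from (dsrc d) (d :: l) /\ path_end (dsrc d) (d :: l) = dsrc d.

Definition connected_cx (X : complex) : Prop :=
  (exists v : V X, True) /\
  forall u w : V X, exists l, path_from u l /\ path_end u l = w.

Definition is_side {X : complex} (x : E X) (R : F X) (i : nat) : Prop :=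
  exists d, nth_error (bd X R) i = Some d /\ fst d = x.

Definition thin (X : complex) : Prop :=
  forall x : E X, exists l : list (F X * nat),
    forall R i, is_side x R i -> In (R, i) l.

(* The circle C_n has vertices 0..n-1 and edges i : i -> i+1 (mod n).
   The isomorphism phi_(a,rev) sends vertex j to a+j (rev=false) or a-j
   (rev=true); edge i then goes to edge a+i (same direction) or to edge
   a-i-1 traversed backwards. *)
Definition vtx_idx (n a : nat) (rev : bool) (j : nat) : nat :=
  if rev then (a + n - j) mod n else (a + j) mod n.
Definition circ_idx (n a : nat) (rev : bool) (i : nat) : nat :=
  if rev then (a + 2 * n - i - 1) mod n else (a + i) mod n.
Definition orient {X : complex} (rev : bool) (o : option (dart X)) :=
  if rev then option_map drev o else o.

Definition circ_iso {X : complex} (L1 L2 : list (dart X)) (a : nat) (rev : bool) : Prop :=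
  length L2 = length L1 /\ a < length L1 /\
  forall i, i < length L1 ->
    nth_error L2 (circ_idx (length L1) a rev i) = orient rev (nth_error L1 i).

(* combinatorial map of the interval graph into the circle C_n (n = |L|),
   starting at circle vertex c, with steps (true = forward, false = backward),
   whose composite with L is the path l *)
Fixpoint lift_ok {X : complex} (L : list (dart X)) (c : nat) (steps : list bool)
    (l : list (dart X)) : Prop :=
  match steps, l with
  | [], [] => True
  | true :: st, d :: l' =>
      nth_error L c = Some d /\ lift_ok L ((c + 1) mod length L) st l'
  | false :: st, d :: l' =>
      nth_error L ((c + length L - 1) mod length L) = Some (drev d) /\
      lift_ok L ((c + length L - 1) mod length L) st l'
  | _, _ => False
  end.
Definition lifts {X : complex} (L : list (dart X)) (s : nat) (steps : list bool)
    (l : list (dart X)) : Prop :=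
  s < length L /\ lift_ok L s steps l.

(* P is a piece: nontrivial, with two lifts to boundary circles of 2-cells
   that are not related by any compatible isomorphism of boundary circles *)
Definition is_piece {X : complex} (P : list (dart X)) : Prop :=
  P <> [] /\
  exists (R1 : F X) s1 st1 (R2 : F X) s2 st2,
    lifts (bd X R1) s1 st1 P /\ lifts (bd X R2) s2 st2 P /\
    ~ (exists a rev, circ_iso (bd X R1) (bd X R2) a rev /\
         s2 = vtx_idx (length (bd X R1)) a rev s1 /\
         st2 = (if rev then map negb st1 else st1)).

Record subcx (X : complex) : Type := Subcx {
  YV : V X -> Prop; YE : E X -> Prop; YF : F X -> Prop }.

Definition is_subcomplex {X : complex} (Y : subcx X) : Prop :=
  (forall e, YE Y e -> YV Y (e1 X e) /\ YV Y (e2 X e)) /\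
  (forall R d, YF Y R -> In d (bd X R) -> YE Y (fst d)).

Definition sub_connected {X : complex} (Y : subcx X) : Prop :=
  (exists v, YV Y v) /\
  forall u w, YV Y u -> YV Y w ->
    exists l, path_from u l /\ path_end u l = w /\ Forall (fun d => YE Y (fst d)) l.

(* missing 3-shell: R not in Y, boundary cycle of R (read from some base
   vertex a in some direction) equals Q ++ S, Q a path in Y, S a
   concatenation of at most 3 pieces *)
Definition missing_3shell {X : complex} (Y : subcx X) (R : F X) : Prop :=
  ~ YF Y R /\
  exists (Q S : list (dart X)) a rev,
    circ_iso (Q ++ S) (bd X R) a rev /\
    (exists d, nth_error (bd X R) a = Some d /\ YV Y (dsrc d)) /\
    Forall (fun d => YE Y (fst d)) Q /\
    exists ps : list (list (dart X)),
      length ps <= 3 /\ Forall is_piece ps /\ S = concat ps.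

Definition has_missing_3shell {X : complex} (Y : subcx X) : Prop :=
  exists R, missing_3shell Y R.

Definition missing {X : complex} (Y : subcx X) (x : E X) (R : F X) (i : nat) : Prop :=
  is_side x R i /\ ~ YF Y R.
Definition missing_card {X : complex} (Y : subcx X) (x : E X) (m : nat) : Prop :=
  exists l : list (F X * nat), NoDup l /\
    (forall R i, In (R, i) l <-> missing Y x R i) /\ length l = m.

Record group : Type := Group {
  G :> Type;
  gmul : G -> G -> G; ginv : G -> G; gone : G;
  gmulA : forall x y z, gmul x (gmul y z) = gmul (gmul x y) z;
  gmul1 : forall x, gmul gone x = x;
  gmulV : forall x, gmul (ginv x) x = gone }.

(* actE g e is the image 1-cell; flip g e says whether its orientation is reversed *)
Record action (X : complex) (Gr : group) : Type := Action {
  actV : Gr -> V X -> V X;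
  actE : Gr -> E X -> E X;
  flip : Gr -> E X -> bool;
  actF : Gr -> F X -> F X }.

Definition actD {X : complex} {Gr : group} (A : action X Gr) (g : Gr) (d : dart X)
  : dart X := (actE A g (fst d), xorb (snd d) (flip A g (fst d))).

(* faithful action of Gr by cellular automorphisms: Gr "is" a subgroup H of Aut(X) *)
Definition is_aut_action {X : complex} {Gr : group} (A : action X Gr) : Prop :=
  (forall v, actV A (gone Gr) v = v) /\
  (forall g h v, actV A (gmul Gr g h) v = actV A g (actV A h v)) /\
  (forall d, actD A (gone Gr) d = d) /\
  (forall g h d, actD A (gmul Gr g h) d = actD A g (actD A h d)) /\
  (forall R, actF A (gone Gr) R = R) /\
  (forall g h R, actF A (gmul Gr g h) R = actF A g (actF A h R)) /\
  (forall g d, dsrc (actD A g d) = actV A g (dsrc d)) /\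
  (forall g R, exists a rev,
      circ_iso (map (actD A g) (bd X R)) (bd X (actF A g R)) a rev) /\
  (forall g, (forall v, actV A g v = v) -> (forall d, actD A g d = d) ->
             (forall R, actF A g R = R) -> g = gone Gr).

Definition rel_fg {X : complex} {Gr : group} (A : action X Gr) : Prop :=
  exists (vs : list (V X)) (S : list Gr),
    forall g : Gr, exists w : list Gr,
      Forall (fun h => In h S \/ In (ginv Gr h) S \/
                       exists v, In v vs /\ actV A h v = v) w /\
      g = fold_right (gmul Gr) (gone Gr) w.

Definition cocompact {X : complex} {Gr : group} (A : action X Gr) (Y : subcx X) : Prop :=
  (forall g v, YV Y v -> YV Y (actV A g v)) /\
  (forall g e, YE Y e -> YE Y (actE A g e)) /\
  (forall g R, YF Y R -> YF Y (actF A g R)) /\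
  (exists lv : list (V X), forall v, YV Y v -> exists r g, In r lv /\ actV A g r = v) /\
  (exists le : list (E X), forall e, YE Y e -> exists r g, In r le /\ actE A g r = e) /\
  (exists lf : list (F X), forall R, YF Y R -> exists r g, In r lf /\ actF A g r = R).

Definition per_is {X : complex} {Gr : group} (A : action X Gr) (Y : subcx X) (n : nat) : Prop :=
  exists reps : list (E X),
    Forall (YE Y) reps /\
    (forall e, YE Y e -> exists r g, In r reps /\ actE A g r = e) /\
    (forall i j r1 r2, nth_error reps i = Some r1 -> nth_error reps j = Some r2 ->
       (exists g, actE A g r1 = r2) -> i = j) /\
    exists ms : list nat, Forall2 (missing_card Y) reps ms /\ n = list_sum ms.

Definition perimeter_reduction (X : complex) : Prop :=
  forall (Gr : group) (A : action X Gr), is_aut_action A -> rel_fg A ->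
  forall Y : subcx X, is_subcomplex Y -> sub_connected Y -> cocompact A Y ->
    has_missing_3shell Y ->
    forall n, per_is A Y n ->
      exists (Y' : subcx X) n', is_subcomplex Y' /\ sub_connected Y' /\
        cocompact A Y' /\ per_is A Y' n' /\ n' < n.

(* Main.v *)
Require Import Defs.
From Stdlib Require Import List Arith Bool Classical Lia Wf_nat.
Import ListNotations.

Lemma ginv_r (Gr : group) (x : Gr) : gmul Gr x (ginv Gr x) = gone Gr.
Proof.
  rewrite <- (gmul1 Gr (gmul Gr x (ginv Gr x))).
  rewrite <- (gmulV Gr (ginv Gr x)) at 1.
  rewrite <- gmulA. rewrite (gmulA Gr (ginv Gr x) x (ginv Gr x)).
  rewrite (gmulV Gr x), (gmul1 Gr (ginv Gr x)). apply gmulV.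
Qed.

Lemma dsrc_drev {X} (d : dart X) : dsrc (drev d) = dtgt d.
Proof. destruct d as [e []]; reflexivity. Qed.
Lemma dtgt_drev {X} (d : dart X) : dtgt (drev d) = dsrc d.
Proof. destruct d as [e []]; reflexivity. Qed.

Lemma path_app {X} (u : V X) l1 l2 : path_from u l1 -> path_from (path_end u l1) l2 ->
  path_from u (l1 ++ l2) /\ path_end u (l1 ++ l2) = path_end (path_end u l1) l2.
Proof.
  revert u; induction l1 as [|d l IH]; intros u H1 H2; simpl in *. auto.
  destruct H1 as [Hs Hp]. destruct (IH _ Hp H2). auto.
Qed.

Lemma path_split {X} (u : V X) l1 d l2 : path_from u (l1 ++ d :: l2) ->
  path_from u l1 /\ dsrc d = path_end u l1 /\ path_from u (l1 ++ [d]) /\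
  path_end u (l1 ++ [d]) = dtgt d.
Proof.
  revert u; induction l1 as [|d' l IH]; intros u H; simpl in *.
  - destruct H; auto.
  - destruct H as [H0 H1]. destruct (IH _ H1) as (?&?&?&?). repeat split; auto.
Qed.

Definition rpath {X} (l : list (dart X)) := rev (map drev l).

Lemma path_rev {X} (u : V X) l : path_from u l ->
  path_from (path_end u l) (rpath l) /\ path_end (path_end u l) (rpath l) = u.
Proof.
  revert u; induction l as [|d l IH]; intros u H; simpl in *. auto.
  destruct H as [Hs Hp]. destruct (IH _ Hp) as [A1 A2]. unfold rpath in *. simpl.
  destruct (path_app _ (rev (map drev l)) [drev d] A1) as [B1 B2].
  - rewrite A2. simpl. split; [apply dsrc_drev|exact I].
  - split; [exact B1|]. rewrite B2, A2. simpl. rewrite dtgt_drev. auto.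
Qed.

Lemma actD_drev {X Gr} (A : action X Gr) g (d : dart X) :
  actD A g (drev d) = drev (actD A g d).
Proof. destruct d as [e b]; unfold actD, drev; simpl; destruct b, (flip A g e); reflexivity. Qed.

Lemma dtgt_act {X Gr} (A : action X Gr) (HA : is_aut_action A) g d :
  dtgt (actD A g d) = actV A g (dtgt d).
Proof.
  destruct HA as (_&_&_&_&_&_&Hsrc&_).
  rewrite <- dsrc_drev, <- actD_drev, Hsrc, dsrc_drev. reflexivity.
Qed.

Lemma path_act {X Gr} (A : action X Gr) (HA : is_aut_action A) g u l :
  path_from u l -> path_from (actV A g u) (map (actD A g) l) /\
  path_end (actV A g u) (map (actD A g) l) = actV A g (path_end u l).
Proof.
  revert u; induction l as [|d l IH]; intros u H; simpl in *. auto.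
  destruct H as [Hs Hp].
  assert (E1 : dsrc (actD A g d) = actV A g (dsrc d)).
  { destruct HA as (_&_&_&_&_&_&Hsrc&_). apply Hsrc. }
  rewrite (dtgt_act A HA). destruct (IH _ Hp). subst. auto.
Qed.

Lemma actE1 {X Gr} (A : action X Gr) (HA : is_aut_action A) e : actE A (gone Gr) e = e.
Proof.
  destruct HA as (_&_&HD1&_). pose proof (f_equal fst (HD1 (e,true))) as H.
  unfold actD in H; simpl in H. exact H.
Qed.

Lemma actEc {X Gr} (A : action X Gr) (HA : is_aut_action A) g h e :
  actE A (gmul Gr g h) e = actE A g (actE A h e).
Proof.
  destruct HA as (_&_&_&HDc&_). pose proof (f_equal fst (HDc g h (e,true))) as H.
  unfold actD in H; simpl in H. exact H.
Qed.

Definition conn {X} (P : E X -> Prop) (u w : V X) :=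
  exists l, path_from u l /\ path_end u l = w /\ Forall (fun d => P (fst d)) l.

Lemma conn_refl {X} P (u : V X) : conn P u u.
Proof. exists []; simpl; auto. Qed.

Lemma conn_trans {X} P (u v w : V X) : conn P u v -> conn P v w -> conn P u w.
Proof.
  intros (l1&A1&A2&A3) (l2&B1&B2&B3). subst.
  destruct (path_app u l1 l2 A1 B1) as [C1 C2].
  exists (l1 ++ l2). repeat split; auto. apply Forall_app; auto.
Qed.

Lemma conn_sym {X} P (u v : V X) : conn P u v -> conn P v u.
Proof.
  intros (l&A1&A2&A3). subst. destruct (path_rev u l A1).
  exists (rpath l). repeat split; auto.
  rewrite Forall_forall in *. intros x Hx. unfold rpath in Hx.
  apply in_rev in Hx. apply in_map_iff in Hx. destruct Hx as (y&<-&Hy).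
  destruct y; apply (A3 _ Hy).
Qed.

Lemma conn_act {X Gr} (A : action X Gr) (HA : is_aut_action A) (P : E X -> Prop)
  (HP : forall g e, P e -> P (actE A g e)) g u v :
  conn P u v -> conn P (actV A g u) (actV A g v).
Proof.
  intros (l&A1&A2&A3). subst. destruct (path_act A HA g u l A1).
  exists (map (actD A g) l). repeat split; auto.
  rewrite Forall_forall in *. intros x Hx.
  apply in_map_iff in Hx. destruct Hx as (y&<-&Hy). apply HP. apply A3; auto.
Qed.

Lemma filter_nodup {T} (P : T -> Prop) (l : list T) :
  exists l', NoDup l' /\ forall x, In x l' <-> In x l /\ P x.
Proof.
  induction l as [|a l (l'&N&H)].
  - exists []. split; [constructor|]. intros x; simpl; tauto.
  - destruct (classic (P a /\ ~ In a l')) as [[Pa Na]|Hn].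
    + exists (a :: l'). split; [constructor; auto|]. intros x; simpl. split.
      * intros [<-|Hx]; [auto|]. apply H in Hx. tauto.
      * intros [[<-|Hin] Hp]; [auto|]. right. apply H; auto.
    + exists l'. split; auto. intros x; simpl. split.
      * intros Hx. apply H in Hx. tauto.
      * intros [[<-|Hin] Hp]; [|apply H; auto].
        apply NNPP. intro C. apply Hn. auto.
Qed.

Lemma exists_Forall2 {A B} (Rl : A -> B -> Prop) (l : list A) :
  (forall a, exists b, Rl a b) -> exists lb, Forall2 Rl l lb.
Proof.
  intros H. induction l as [|a l (lb&IH)].
  - exists []; constructor.
  - destruct (H a) as [b Hb]. exists (b :: lb). constructor; auto.
Qed.

Lemma orbit_reps {X Gr} (A : action X Gr) (HA : is_aut_action A) (le : list (E X)) :
  exists l', (forall x, In x l' -> In x le) /\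
    (forall r, In r le -> exists r' g, In r' l' /\ actE A g r' = r) /\
    (forall i j r1 r2, nth_error l' i = Some r1 -> nth_error l' j = Some r2 ->
       (exists g, actE A g r1 = r2) -> i = j).
Proof.
  induction le as [|a le (l'&S1&S2&S3)].
  - exists []. repeat split.
    + intros x [].
    + intros r [].
    + intros i j r1 r2 H. destruct i; discriminate.
  - destruct (classic (exists r' g, In r' l' /\ actE A g r' = a)) as [Ha|Ha].
    + exists l'. repeat split.
      * intros x Hx. right; auto.
      * intros r [<-|Hr]; auto.
      * exact S3.
    + exists (a :: l'). repeat split.
      * intros x [<-|Hx]; [left|right]; auto.
      * intros r [<-|Hr].
        -- exists a, (gone Gr). split; [left; auto|apply (actE1 A HA)].
        -- destruct (S2 r Hr) as (r'&g&Hi&He). exists r', g. split; [right|]; auto.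
      * intros [|i] [|j] r1 r2 H1 H2 (g&Hg); simpl in *; auto.
        -- exfalso. injection H1 as <-. apply Ha. exists r2, (ginv Gr g).
           split; [eapply nth_error_In; eauto|].
           subst. rewrite <- (actEc A HA), gmulV. apply (actE1 A HA).
        -- exfalso. injection H2 as <-. apply Ha. exists r1, g.
           split; [eapply nth_error_In; eauto|auto].
        -- f_equal. eapply S3; eauto.
Qed.

Lemma get_paths {X} (v0 : V X)
  (Hc : forall u w : V X, exists l, path_from u l /\ path_end u l = w) (ts : list (V X)) :
  exists ps, Forall (path_from v0) ps /\
    forall t, In t ts -> exists p, In p ps /\ path_end v0 p = t.
Proof.
  induction ts as [|t ts (ps&H1&H2)].
  - exists []. split; [constructor|intros t []].
  - destruct (Hc v0 t) as (p&P1&P2). exists (p :: ps). split; [constructor; auto|].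
    intros t' [<-|Ht].
    + exists p; split; [left|]; auto.
    + destruct (H2 t' Ht) as (q&Q1&Q2). exists q; split; [right|]; auto.
Qed.

Lemma descent (X : complex) (Gr : group) (A : action X Gr) :
  perimeter_reduction X -> is_aut_action A -> rel_fg A ->
  forall n (Y : subcx X), is_subcomplex Y -> sub_connected Y -> cocompact A Y ->
  per_is A Y n ->
  exists Y : subcx X, is_subcomplex Y /\ sub_connected Y /\ cocompact A Y /\
    ~ has_missing_3shell Y.
Proof.
  intros HPR HA Hfg n. induction n as [n IH] using lt_wf_ind.
  intros Y H1 H2 H3 H4.
  destruct (classic (has_missing_3shell Y)) as [Hm|Hm].
  - destruct (HPR Gr A HA Hfg Y H1 H2 H3 Hm n H4) as (Y'&n'&B1&B2&B3&B4&B5).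
    exact (IH n' B5 Y' B1 B2 B3 B4).
  - exists Y; auto.
Qed.

Lemma ends_act {X Gr} (A : action X Gr) (HA : is_aut_action A) g (d : dart X) :
  (e1 X (actE A g (fst d)) = actV A g (dsrc d) /\ e2 X (actE A g (fst d)) = actV A g (dtgt d)) \/
  (e1 X (actE A g (fst d)) = actV A g (dtgt d) /\ e2 X (actE A g (fst d)) = actV A g (dsrc d)).
Proof.
  assert (Hs : dsrc (actD A g d) = actV A g (dsrc d)).
  { destruct HA as (_&_&_&_&_&_&Hsrc&_). apply Hsrc. }
  rewrite <- Hs, <- (dtgt_act A HA). unfold actD.
  destruct (xorb (snd d) (flip A g (fst d))); [left|right]; unfold dsrc, dtgt; simpl; auto.
Qed.

Theorem lemma3p22 (X : complex) (Gr : group) (A : action X Gr) :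
  wf_complex X -> connected_cx X -> thin X -> perimeter_reduction X ->
  is_aut_action A -> rel_fg A ->
  exists Y : subcx X, is_subcomplex Y /\ sub_connected Y /\ cocompact A Y /\
    ~ has_missing_3shell Y.
Proof.
  intros Hwf Hconn Hthin HPR HA Hfg.
  pose proof Hfg as Hfg'.
  destruct Hconn as [[v0 _] Hc].
  destruct Hfg' as (vs & S & Hw).
  destruct (get_paths v0 Hc (map (fun s => actV A s v0) S ++ vs)) as (ps & Hps & Htg).
  set (P := concat ps).
  set (YE := fun e => exists g d, In d P /\ actE A g (fst d) = e).
  set (YV := fun v => (exists g, actV A g v0 = v) \/
                      exists g d, In d P /\ (actV A g (dsrc d) = v \/ actV A g (dtgt d) = v)).
  set (Y := Subcx X YV YE (fun _ => False)).
  pose proof HA as HA'.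
  destruct HA' as (HV1 & HVc & HD1 & HDc & HF1 & HFc & Hsrc & Hiso & Hfaith).
  assert (HYE : forall g e, YE e -> YE (actE A g e)).
  { intros h e (g&d&Hd&<-). exists (gmul Gr h g), d. split; auto. apply (actEc A HA). }
  assert (HP : forall d, In d P -> YE (fst d)).
  { intros d Hd. exists (gone Gr), d. split; auto. apply (actE1 A HA). }
  assert (Hpin : forall p, In p ps -> Forall (fun d => YE (fst d)) p).
  { intros p Hp. rewrite Forall_forall. intros d Hd. apply HP.
    unfold P. apply in_concat. eauto. }
  assert (Htc : forall t, In t (map (fun s => actV A s v0) S ++ vs) -> conn YE v0 t).
  { intros t Ht. destruct (Htg t Ht) as (p&Hp&He). exists p. repeat split; auto.
    rewrite Forall_forall in Hps. auto. }
  assert (Hgen : forall h, (In h S \/ In (ginv Gr h) S \/ exists v, In v vs /\ actV A h v = v) ->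
            conn YE v0 (actV A h v0)).
  { intros h [Hh|[Hh|(v&Hv&Hf)]].
    - apply Htc. apply in_or_app. left. apply in_map_iff. eauto.
    - assert (C : conn YE v0 (actV A (ginv Gr h) v0)).
      { apply Htc. apply in_or_app. left. apply in_map_iff. eauto. }
      apply (conn_act A HA YE HYE h) in C.
      rewrite <- HVc, ginv_r, HV1 in C. apply conn_sym; auto.
    - assert (C : conn YE v0 v). { apply Htc. apply in_or_app. right. auto. }
      pose proof C as C'.
      apply (conn_act A HA YE HYE h) in C. rewrite Hf in C.
      apply conn_trans with v; auto. apply conn_sym; auto. }
  assert (Horb : forall g, conn YE v0 (actV A g v0)).
  { intros g. destruct (Hw g) as (w&Hw1&->). clear Hw.
    induction w as [|h w IH]; simpl.
    - rewrite HV1. apply conn_refl.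
    - inversion Hw1; subst. rewrite HVc.
      apply conn_trans with (actV A h v0); auto.
      apply (conn_act A HA YE HYE h). auto. }
  assert (Hall : forall v, YV v -> conn YE v0 v).
  { intros v [(g&<-)|(g&d&Hd&Hv)]; auto.
    unfold P in Hd. apply in_concat in Hd. destruct Hd as (p&Hp&Hd).
    apply in_split in Hd. destruct Hd as (p1&p2&->).
    rewrite Forall_forall in Hps. pose proof (Hps _ Hp) as Hpp.
    pose proof (Hpin _ Hp) as Hpi. rewrite Forall_forall in Hpi.
    destruct (path_split v0 p1 d p2 Hpp) as (Q1&Q2&Q3&Q4).
    assert (C : conn YE v0 (dsrc d) /\ conn YE v0 (dtgt d)).
    { split.
      - exists p1. repeat split; auto. rewrite Forall_forall. intros x Hx.
        apply Hpi. apply in_or_app; auto.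
      - exists (p1 ++ [d]). repeat split; auto. rewrite Forall_forall. intros x Hx.
        apply Hpi. apply in_app_or in Hx. destruct Hx as [Hx|[<-|[]]];
        apply in_or_app; simpl; auto. }
    destruct C as [C1 C2].
    apply conn_trans with (actV A g v0); auto.
    destruct Hv as [<-|<-]; apply (conn_act A HA YE HYE g); auto. }
  assert (Hsub : is_subcomplex Y).
  { split; simpl.
    - intros e (g&d&Hd&<-).
      destruct (ends_act A HA g d) as [[-> ->]|[-> ->]]; split; right; exists g, d; auto.
    - intros R d []. }
  assert (Hsc : sub_connected Y).
  { split; simpl.
    - exists v0. left. exists (gone Gr). apply HV1.
    - intros u w Hu Hw'. apply Hall in Hu. apply Hall in Hw'.
      destruct (conn_trans _ _ _ _ (conn_sym _ _ _ Hu) Hw') as (l&L1&L2&L3).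
      exists l. auto. }
  assert (Hcc : cocompact A Y).
  { repeat split; simpl.
    - intros h v [(g&<-)|(g&d&Hd&[<-|<-])].
      + left. exists (gmul Gr h g). apply HVc.
      + right. exists (gmul Gr h g), d. rewrite HVc. auto.
      + right. exists (gmul Gr h g), d. rewrite HVc. auto.
    - apply HYE.
    - intros _ _ [].
    - exists (v0 :: flat_map (fun d => [dsrc d; dtgt d]) P).
      intros v [(g&<-)|(g&d&Hd&[<-|<-])].
      + exists v0, g. simpl; auto.
      + exists (dsrc d), g. split; auto. right. apply in_flat_map. exists d. simpl; auto.
      + exists (dtgt d), g. split; auto. right. apply in_flat_map. exists d. simpl; auto.
    - exists (map fst P). intros e (g&d&Hd&<-). exists (fst d), g. split; auto.
      apply in_map; auto.
    - exists (@nil (F X)). intros R []. }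
  destruct (orbit_reps A HA (map fst P)) as (reps&R1&R2&R3).
  assert (Hmc : forall x, exists m, missing_card Y x m).
  { intros x. destruct (Hthin x) as (lx&Hlx).
    destruct (filter_nodup (fun p : F X * nat => missing Y x (fst p) (snd p)) lx) as (l'&N&Hl').
    exists (length l'). exists l'. split; [exact N|split; [|reflexivity]]. intros R i. split.
    - intros Hi. apply Hl' in Hi. destruct Hi as [_ Hi]. exact Hi.
    - intros Hi. apply Hl'. split; auto. apply Hlx. destruct Hi; auto. }
  destruct (exists_Forall2 (missing_card Y) reps Hmc) as (ms&Hms).
  apply (descent X Gr A HPR HA Hfg (list_sum ms) Y Hsub Hsc Hcc).
  exists reps. repeat split.
  - rewrite Forall_forall. intros x Hx. apply R1 in Hx. apply in_map_iff in Hx.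
    destruct Hx as (d&<-&Hd). simpl. apply HP; auto.
  - simpl. intros e (g&d&Hd&<-).
    destruct (R2 (fst d)) as (r'&g'&Hr&He). apply in_map; auto.
    exists r', (gmul Gr g g'). split; auto. rewrite (actEc A HA). congruence.
  - exact R3.
  - exists ms. auto.
Qed.
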